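(* Let $G$ be a connected graph with $n$ vertices and $m$ edges. If $n\ge 15$ and $n+8\le m\le \min\{2n^{3/2},\binom{n}{2}\}$, then $\frac{q(G)}{R(G)}<\frac{n}{\sqrt{n-1}}$.
   Context: All graphs are finite and simple. For a vertex $u$, $d(u)$ is its degree. The Randić index is $R(G)=\sum_{\{u,v\}\in E(G)} \frac{1}{\sqrt{d(u)d(v)}}$. The signless Laplacian is $Q=D+A$ ($D$ the diagonal degree matrix, $A$ the adjacency matrix), and $q(G)$ is its largest eigenvalue. *)

(* Defs.v *)
From HB Require Import structures.
From mathcomp Require Import all_boot all_order all_algebra.
Set Implicit Arguments. Unset Strict Implicit. Unset Printing Implicit Defensive.
Import Order.TTheory GRing.Theory Num.Theory.
Local Open Scope ring_scope.

Definition simple_graph (n : nat) (e : rel 'I_n) : Prop :=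
  symmetric e /\ irreflexive e.

Definition connected_graph (n : nat) (e : rel 'I_n) : Prop :=
  forall x y : 'I_n, connect e x y.

Definition deg (n : nat) (e : rel 'I_n) (u : 'I_n) : nat := #|[set v | e u v]|.

Definition nedges (n : nat) (e : rel 'I_n) : nat :=
  (#|[set p : 'I_n * 'I_n | e p.1 p.2]|)./2.

(* Randic index: sum over unordered edges {u,v} of 1/sqrt(d(u) d(v));
   each unordered edge appears twice among ordered pairs, hence the 1/2 *)
Definition randic (R : rcfType) (n : nat) (e : rel 'I_n) : R :=
  2^-1 * \sum_(u : 'I_n) \sum_(v : 'I_n | e u v)
     (Num.sqrt ((deg e u)%:R * (deg e v)%:R))^-1.

Definition signless_laplacian (R : rcfType) (n : nat) (e : rel 'I_n) : 'M[R]_n :=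
  \matrix_(i, j) ((if i == j then (deg e i)%:R else 0) + (e i j)%:R).

Definition largest_eigenvalue (R : rcfType) (n : nat) (A : 'M[R]_n) (x : R) : Prop :=
  eigenvalue A x /\ forall y, eigenvalue A y -> y <= x.

(* Main.v *)
Require Import Defs.
From HB Require Import structures.
From mathcomp Require Import all_boot all_order all_algebra.
From mathcomp Require Import ring lra zify.
Import Order.TTheory GRing.Theory Num.Theory.

Lemma degE n (e : rel 'I_n) u : deg e u = (\sum_v (e u v : nat))%N.
Proof.
rewrite /deg -sum1_card big_mkcond /=; apply: eq_bigr => v _.
by rewrite inE; case: (e u v).
Qed.

Lemma pairsE n (e : rel 'I_n) :
  #|[set p : 'I_n * 'I_n | e p.1 p.2]| = (\sum_u \sum_v (e u v : nat))%N.
Proof.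
rewrite -sum1_card big_mkcond /= pair_big /=; apply: eq_bigr => p _.
by rewrite inE; case: (e p.1 p.2).
Qed.

Lemma pairs_even n (e : rel 'I_n) : simple_graph e ->
  (\sum_u \sum_v (e u v : nat))%N =
  (2 * \sum_u \sum_v ((e u v && (u < v)%N) : nat))%N.
Proof.
move=> [Hs Hi].
have H1 : forall u v, (e u v : nat) = ((e u v && (u < v)%N) : nat) + ((e v u && (v < u)%N) : nat).
  move=> u v; rewrite (Hs v u).
  case: (ltngtP u v) => [||/val_inj ->]; first 1 [by case: (e u v)].
  - by case: (e u v).
  - by rewrite Hi.
under eq_bigr do under eq_bigr do rewrite H1.
under eq_bigr do rewrite big_split /=.
rewrite big_split /= exchange_big /=.
by rewrite mul2n -addnn.
Qed.

Lemma deg_pos n (e : rel 'I_n) u : connected_graph e -> (1 < n)%N -> (0 < deg e u)%N.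
Proof.
move=> Hc Hn.
pose v : 'I_n := if val u == 0%N then Ordinal Hn else Ordinal (ltnW Hn).
have Hvu : v != u.
  rewrite /v; case: (val u =P 0%N) => H; apply/eqP => Hv; move: H; rewrite -Hv /=; lia.
have /connectP [p Hp Hl] := Hc u v.
case: p Hp Hl => [|w p] /=; first by move=> _ Hl; rewrite Hl eqxx in Hvu.
move=> /andP [Huw _] _.
rewrite degE (bigD1 w) //= Huw; lia.
Qed.

Lemma deg_le n (e : rel 'I_n) u : simple_graph e -> (deg e u <= n.-1)%N.
Proof.
move=> [_ Hi].
have <- : #|[set~ u]| = n.-1 by rewrite cardsC1 card_ord.
rewrite /deg; apply: subset_leq_card; apply/subsetP => v.
rewrite !inE => Huv; apply/eqP => Hvu; by rewrite Hvu Hi in Huv.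
Qed.

Lemma S_bound n (e : rel 'I_n) u : simple_graph e -> connected_graph e -> (1 < n)%N ->
  ((\sum_v (e u v : nat) * deg e v) + n.-1 <= \sum_v deg e v)%N.
Proof.
move=> [Hs Hi] Hc Hn.
have H : (\sum_v ((v == u) * deg e u + (e u v : nat) * deg e v + (v != u : nat))
          <= \sum_v (deg e v + (e u v : nat)))%N.
  apply: leq_sum => v _.
  case: (eqVneq v u) => [->|Hvu]; first by rewrite Hi /=; lia.
  case Heuv : (e u v) => /=; first lia.
  have := @deg_pos n e v Hc Hn; lia.
rewrite !big_split /= in H.
have E1 : (\sum_(v < n) (v == u) * deg e u = deg e u)%N.
  rewrite (bigD1 u) //= eqxx big1 ?addn0 ?mul1n // => v /negbTE ->; by rewrite mul0n.
have E2 : (\sum_(v < n) (v != u : nat) = n.-1)%N.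
  rewrite -[in RHS](card_ord n) -(cardsC1 u) -sum1_card [RHS]big_mkcond /=.
  by apply: eq_bigr => v _; rewrite !inE; case: (v != u).
rewrite E1 E2 -degE in H.
by move: H; rewrite -addnA addnC leq_add2r.
Qed.

Lemma S_bound2 n (e : rel 'I_n) u : simple_graph e ->
  (\sum_v (e u v : nat) * deg e v <= deg e u * n.-1)%N.
Proof.
move=> Hg.
rewrite degE big_distrl /=; apply: leq_sum => v _.
have := @deg_le n e v Hg; case: (e u v) => /=; lia.
Qed.
Local Open Scope ring_scope.

Lemma exists_max (R : realDomainType) n (i0 : 'I_n) (f : 'I_n -> R) :
  exists i, forall j, f j <= f i.
Proof.
case: (@arg_maxP _ R _ i0 xpredT f isT) => i _ Hi.
by exists i => j; apply: Hi.
Qed.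

Lemma eig_bound (R : rcfType) n (e : rel 'I_n) q :
  simple_graph e -> connected_graph e -> (1 < n)%N ->
  eigenvalue (signless_laplacian R e) q -> 0 < q ->
  exists u, q * (deg e u)%:R <= (deg e u)%:R ^+ 2 + (\sum_v (e u v : nat) * deg e v)%N%:R.
Proof.
move=> [Hs Hi] Hc Hn /eigenvalueP [v Hv Hv0] Hq.
have i0 : 'I_n by exact: Ordinal (ltnW Hn).
have dpos : forall j, 0 < (deg e j)%:R :> R.
  by move=> j; rewrite ltr0n; apply: deg_pos.
pose f j := `|v ord0 j| / (deg e j)%:R.
have [i Hmax] := @exists_max _ _ i0 f.
pose c := f i.
have Hvj : forall j, `|v ord0 j| <= c * (deg e j)%:R.
  move=> j; have := Hmax j; rewrite /f -/c => H.
  by rewrite -ler_pdivrMr // .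
have Hvi : `|v ord0 i| = c * (deg e i)%:R.
  by rewrite /c /f divfK // gt_eqF.
have Hcpos : 0 < c.
  rewrite lt_def; apply/andP; split; last by rewrite /c /f divr_ge0.
  apply/negP => /eqP c0; move/negP: Hv0; apply; apply/eqP.
  apply/matrixP => a j; rewrite (ord1 a) !mxE.
  by apply/normr0_eq0/eqP; rewrite eq_le normr_ge0 andbT -(mul0r (deg e j)%:R) -c0.
have Heq := congr1 (fun M : 'rV_n => M ord0 i) Hv; rewrite /= !mxE in Heq.
have Hsum : \sum_j v ord0 j * signless_laplacian R e j i =
            v ord0 i * (deg e i)%:R + \sum_j v ord0 j * (e i j)%:R.
  rewrite /signless_laplacian.
  under eq_bigr do rewrite mxE mulrDr.
  rewrite big_split /= (bigD1 i) //= eqxx big1 ?addr0; last first.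
    by move=> j /negbTE ->; rewrite mulr0.
  by congr (_ + _); apply: eq_bigr => j _; rewrite (Hs j i).
rewrite Hsum in Heq.
exists i.
have H1 : q * `|v ord0 i| <= `|v ord0 i| * (deg e i)%:R + c * (\sum_v (e i v : nat) * deg e v)%N%:R.
  have -> : q * `|v ord0 i| = `|q * v ord0 i| by rewrite normrM gtr0_norm.
  rewrite -Heq; apply: (le_trans (ler_normD _ _)).
  rewrite normrM (@ger0_norm _ (deg e i)%:R) // lerD2l.
  apply: (le_trans (ler_norm_sum _ _ _)).
  rewrite natr_sum mulr_sumr; apply: ler_sum => j _.
  case: (e i j); rewrite /= ?mul1n ?mul0n ?mulr1 ?mulr0 ?normr0 ?mul0r //.
rewrite Hvi in H1.
have H2 : c * (q * (deg e i)%:R) <= c * ((deg e i)%:R ^+ 2 + (\sum_v (e i v : nat) * deg e v)%N%:R).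
  by move: H1; rewrite mulrDr expr2; nra.
by rewrite ler_pM2l in H2.
Qed.

Lemma tangent (R : rcfType) (k s : R) : 0 < k -> 0 < s ->
  3 / 2 - s ^+ 2 / (2 * k ^+ 2) <= k * s^-1.
Proof.
move=> hk hs.
have H : 0 <= (k - s) ^+ 2 * (2 * k + s) by apply: mulr_ge0; [apply: sqr_ge0 | lra].
rewrite -subr_ge0.
have -> : k * s^-1 - (3 / 2 - s ^+ 2 / (2 * k ^+ 2)) = (k - s) ^+ 2 * (2 * k + s) / (2 * k ^+ 2 * s).
  by field; rewrite !gt_eqF.
apply: divr_ge0 => //; apply: mulr_ge0 => //; [apply: mulr_ge0 => //; apply: sqr_ge0|]; lra.
Qed.

Lemma randic_lb (R : rcfType) n (e : rel 'I_n) :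
  simple_graph e -> connected_graph e -> (1 < n)%N ->
  let D := (\sum_v deg e v)%N in
  let K := D%:R - (n.-1)%:R : R in
  0 < K ->
  D%:R / 2 <= Num.sqrt K * randic R e.
Proof.
move=> Hg Hc Hn D K HK.
set k := Num.sqrt K.
have hk : 0 < k by rewrite sqrtr_gt0.
have hkK : k ^+ 2 = K by rewrite sqr_sqrtr // ltW.
have dpos : forall j, 0 < (deg e j)%:R :> R.
  by move=> j; rewrite ltr0n; apply: deg_pos.
have Lu : forall u, 3 / 2 * (deg e u)%:R - (deg e u)%:R * (\sum_v (e u v : nat) * deg e v)%N%:R / (2 * K)
     <= k * \sum_(v | e u v) (Num.sqrt ((deg e u)%:R * (deg e v)%:R))^-1.
  move=> u.
  rewrite mulr_sumr.
  apply: (@le_trans _ _ (\sum_(v | e u v) (3 / 2 - (Num.sqrt ((deg e u)%:R * (deg e v)%:R)) ^+ 2 / (2 * k ^+ 2)))); last first.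
    apply: ler_sum => v _; apply: tangent => //; by rewrite sqrtr_gt0 mulr_gt0.
  rewrite sumrB; apply: lerB.
    rewrite degE natr_sum mulr_sumr [X in _ <= X]big_mkcond /=; apply: ler_sum => v _.
    by case: (e u v); rewrite /= ?mulr1 ?mulr0.
  rewrite natr_sum mulr_sumr mulr_suml [X in X <= _]big_mkcond /=; apply: ler_sum => v _.
  case: (e u v); rewrite /= ?mul1n ?mul0n ?mulr0 ?mul0r //.
  rewrite sqr_sqrtr ?hkK; last by apply: mulr_ge0; apply: ltW.
  by apply: le_refl.
have Lu2 : forall u, (deg e u)%:R <= k * \sum_(v | e u v) (Num.sqrt ((deg e u)%:R * (deg e v)%:R))^-1.
  move=> u; apply: le_trans (Lu u).
  have HS := @S_bound n e u Hg Hc Hn.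
  have HS' : (\sum_v (e u v : nat) * deg e v)%N%:R <= K.
    rewrite -(ler_nat R) natrD in HS; rewrite /K /D; lra.
  have hd := dpos u.
  have -> : 3 / 2 * (deg e u)%:R - (deg e u)%:R * (\sum_v (e u v : nat) * deg e v)%N%:R / (2 * K)
          = (deg e u)%:R * (3 / 2 - (\sum_v (e u v : nat) * deg e v)%N%:R / (2 * K)).
    by field; rewrite gt_eqF.
  rewrite -{1}[(deg e u)%:R]mulr1 ler_pM2l //.
  have h : (\sum_v (e u v : nat) * deg e v)%N%:R / (2 * K) <= 2^-1.
    rewrite ler_pdivrMr ?mulr_gt0 //; lra.
  lra.
rewrite /randic mulrCA.
have -> : D%:R / 2 = 2^-1 * \sum_u (deg e u)%:R :> R by rewrite /D natr_sum mulrC.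
rewrite ler_pM2l ?invr_gt0 ?ltr0n // mulr_sumr.
by apply: ler_sum => u _; apply: Lu2.
Qed.


Lemma polyF (R : realFieldType) (N m : R) : 15 <= N -> N + 8 <= m -> m ^+ 2 <= 4 * N ^+ 3 ->
  (2 * m + (N - 1) * (N - 2)) ^+ 2 * (2 * m - N + 1) < N ^+ 2 * (N - 1) * m ^+ 2.
Proof.
move=> HN Hm Hm2.
set G := N ^+ 3 - 9 * N ^+ 2 + 12 * N - 148.
have hG1 : N ^+ 2 * (N - 9) <= G.
  rewrite /G; nra.
have hN9 : 0 <= N ^+ 2 * (N - 9) by apply: mulr_ge0; nra.
have hG2 : (N ^+ 2 * (N - 9)) ^+ 2 <= G ^+ 2.
  rewrite ler_sqr // nnegrE; lra.
have hN3 : 256 * N ^+ 3 <= (N ^+ 2 * (N - 9)) ^+ 2.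
  have h1 : 256 <= N * (N - 9) ^+ 2 by nra.
  have h2 : 0 <= N ^+ 3 by apply: exprn_ge0; lra.
  have -> : (N ^+ 2 * (N - 9)) ^+ 2 = N ^+ 3 * (N * (N - 9) ^+ 2) by ring.
  rewrite mulrC; apply: ler_wpM2l => //.
have hm8 : 8 * m <= G.
  have h3 : (8 * m) ^+ 2 <= G ^+ 2 by lra.
  have h4 : 0 <= G by lra.
  have h5 : 0 <= 8 * m by lra.
  by move: h3; rewrite ler_sqr.
set t := m - N - 8.
have ht : 0 <= t by rewrite /t; lra.
have Hc2 : 0 <= (N ^+ 3 - 9 * N ^+ 2 + 4 * N - 212) - 8 * t by rewrite /t /G in hm8 *; lra.
have Hc0 : 0 < 45 * N ^+ 3 - 657 * N ^+ 2 + 288 * N - 5508 by nra.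
have Hc1 : 0 < 14 * N ^+ 3 - 154 * N ^+ 2 + 68 * N - 1872 by nra.
rewrite -subr_gt0.
have -> : N ^+ 2 * (N - 1) * m ^+ 2 - (2 * m + (N - 1) * (N - 2)) ^+ 2 * (2 * m - N + 1)
   = (45 * N ^+ 3 - 657 * N ^+ 2 + 288 * N - 5508) + (14 * N ^+ 3 - 154 * N ^+ 2 + 68 * N - 1872) * t
     + t ^+ 2 * ((N ^+ 3 - 9 * N ^+ 2 + 4 * N - 212) - 8 * t).
  by rewrite /t; ring.
have : 0 <= t ^+ 2 * ((N ^+ 3 - 9 * N ^+ 2 + 4 * N - 212) - 8 * t) by apply: mulr_ge0 => //; apply: sqr_ge0.
have : 0 <= (14 * N ^+ 3 - 154 * N ^+ 2 + 68 * N - 1872) * t by apply: mulr_ge0 => //; lra.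
lra.
Qed.

Theorem lemma3p1 (R : rcfType) (n : nat) (e : rel 'I_n) (q : R) :
  simple_graph e -> connected_graph e ->
  (15 <= n)%N ->
  (n + 8 <= nedges e)%N ->
  (nedges e)%:R <= 2 * (n%:R * Num.sqrt n%:R) :> R ->
  (nedges e <= 'C(n, 2))%N ->
  largest_eigenvalue (signless_laplacian R e) q ->
  q / randic R e < n%:R / Num.sqrt (n.-1)%:R.
Proof.
move=> Hg Hc H15 Hm8 Hup _ [Hq _].
have Hn : (1 < n)%N by lia.
set m := nedges e.
have HD : (\sum_v deg e v)%N = (2 * m)%N.
  have Hp := @pairs_even n e Hg.
  have Hm : m = (\sum_u \sum_v ((e u v && (u < v)%N) : nat))%N.
    by rewrite /m /nedges pairsE Hp mul2n doubleK.
  rewrite Hm -Hp; apply: eq_bigr => u _; by rewrite degE.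
set N : R := n%:R.
set M : R := m%:R.
have hN : 15 <= N by rewrite /N (ler_nat R 15 n).
have hM : N + 8 <= M by rewrite /N /M -natrD ler_nat.
have hN1 : (n.-1)%:R = N - 1 :> R by rewrite /N -[in RHS](prednK (ltnW Hn)) -addn1 natrD addrK.
have hsN : Num.sqrt N ^+ 2 = N by rewrite sqr_sqrtr //; lra.
have hM2 : M ^+ 2 <= 4 * N ^+ 3.
  have h0 : 0 <= M by lra.
  have h1 : 0 <= 2 * (N * Num.sqrt N) by apply: mulr_ge0 => //; apply: mulr_ge0; [lra | apply: sqrtr_ge0].
  have : M ^+ 2 <= (2 * (N * Num.sqrt N)) ^+ 2 by rewrite ler_sqr.
  have -> : (2 * (N * Num.sqrt N)) ^+ 2 = 4 * N ^+ 2 * Num.sqrt N ^+ 2 by ring.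
  by rewrite hsN; move=> ?; lra.
set K : R := (\sum_v deg e v)%N%:R - (n.-1)%:R.
have hK : K = 2 * M - N + 1 by rewrite /K HD hN1 /M natrM; lra.
have hKpos : 0 < K by lra.
have Hlb := @randic_lb R n e Hg Hc Hn hKpos.
rewrite -/K in Hlb.
set k := Num.sqrt K in Hlb.
set Rd := randic R e in Hlb *.
have hk : 0 < k by rewrite sqrtr_gt0.
have hkK : k ^+ 2 = K by rewrite sqr_sqrtr // ltW.
have HMk : M <= k * Rd by move: Hlb; rewrite HD /M natrM; lra.
have hRd : 0 < Rd.
  have : 0 < k * Rd by lra.
  by rewrite pmulr_rgt0.
set r := Num.sqrt (n.-1)%:R.
have hr : 0 < r by rewrite sqrtr_gt0 hN1; lra.
have hrr : r ^+ 2 = N - 1 by rewrite sqr_sqrtr hN1 //; lra.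
rewrite -/N.
case: (lerP q 0) => hq.
  apply: (@le_lt_trans _ _ 0); first by rewrite pmulr_lle0 ?invr_gt0.
  by rewrite divr_gt0 //; lra.
have [u Hu] := @eig_bound R n e q Hg Hc Hn Hq hq.
set d : R := (deg e u)%:R in Hu.
set S : R := (\sum_v (e u v : nat) * deg e v)%N%:R in Hu.
have hd1 : 1 <= d by rewrite /d (ler_nat R 1); apply: deg_pos.
have hdn : d <= N - 1 by rewrite /d -hN1 ler_nat; apply: deg_le.
have hSK : S <= K.
  have := @S_bound n e u Hg Hc Hn; rewrite -(ler_nat R) natrD -/S; rewrite /K; lra.
have hSd : S <= d * (N - 1).
  by rewrite /S /d -hN1 -natrM ler_nat; apply: S_bound2.
have HqB : q * (N - 1) <= 2 * M + (N - 1) * (N - 2).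
  case: (lerP (d * (N - 1)) K) => hcase.
    have h1 : q * d <= d * d + d * (N - 1) by lra.
    have h2 : q <= d + (N - 1).
      have : d * q <= d * (d + (N - 1)) by lra.
      by rewrite ler_pM2l //; lra.
    nra.
  have h1 : q * d * (N - 1) <= (d ^+ 2 + K) * (N - 1) by apply: ler_wpM2r; lra.
  have h2 : (d - (N - 1)) * (d * (N - 1) - K) <= 0 by apply: mulr_le0_ge0; lra.
  have h3 : d * (q * (N - 1)) <= d * (2 * M + (N - 1) * (N - 2)) by nra.
  by rewrite ler_pM2l in h3; lra.
have HF := @polyF R N M hN hM hM2.
have hP2 : (q * k * r) ^+ 2 * (N - 1) < (N * M) ^+ 2 * (N - 1).
  have -> : (q * k * r) ^+ 2 * (N - 1) = (q * (N - 1)) ^+ 2 * K by rewrite -hkK; rewrite -hrr; ring.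
  have hq2 : (q * (N - 1)) ^+ 2 <= (2 * M + (N - 1) * (N - 2)) ^+ 2.
    rewrite ler_sqr // nnegrE; nra.
  rewrite hK; apply: (le_lt_trans (ler_wpM2r _ hq2)); first lra.
  move: HF; rewrite -hK => HF. have -> : (N * M) ^+ 2 * (N - 1) = N ^+ 2 * (N - 1) * M ^+ 2 by ring.
  by rewrite hK in HF *.
have hP : q * k * r < N * M.
  have hP2' : (q * k * r) ^+ 2 < (N * M) ^+ 2 by rewrite -(ltr_pM2r (_ : 0 < N - 1)) //; lra.
  have h0 : 0 <= q * k * r by apply: mulr_ge0; [apply: mulr_ge0|]; lra.
  have h1 : 0 <= N * M by apply: mulr_ge0; lra.
  by move: hP2'; rewrite ltr_sqr ?nnegrE.
have hfin : q * r < N * Rd.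
  have : k * (q * r) < k * (N * Rd) by nra.
  by rewrite ltr_pM2l.
by rewrite ltr_pdivrMr // mulrAC ltr_pdivlMr.
Qed.
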